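(* An $AB\bar B$-formula $\varphi$ is satisfied by some finite interval structure if and only if it is featured by some $\varphi$-compass structure of length $N\le 2^{2^{7|\varphi|}}$.
   Context: Syntax: $AB\bar B$-formulas are built from a set $\mathcal{P}$ of propositional variables using $\neg$, $\vee$ and unary modalities $\langle A\rangle,\langle B\rangle,\langle\bar B\rangle$ ($[R]\psi=\neg\langle R\rangle\neg\psi$); $|\varphi|$ is the size (number of subformulas) of $\varphi$. Semantics: an ordinal $N\le\omega$ is identified with $\{0,\dots,N-1\}$; $\mathbb{I}_N$ is the set of intervals $[x,y]$ with $x,y\in N$, $x<y$. $[x,y]\,A\,[x',y']$ iff $y=x'$; $[x,y]\,B\,[x',y']$ iff $x=x'$ and $y'<y$; $[x,y]\,\bar B\,[x',y']$ iff $x=x'$ and $y<y'$. An interval structure $\mathcal{S}=(\mathbb{I}_N,A,B,\bar B,\sigma)$ has $\sigma:\mathbb{I}_N\to\mathcal{P}(\mathcal{P})$; it is finite if $N<\omega$. $\mathcal{S},I\models p$ iff $p\in\sigma(I)$; booleans as usual; $\mathcal{S},I\models\langle R\rangle\psi$ iff some $J$ with $I\,R\,J$ has $\mathcal{S},J\models\psi$. $\mathcal{S}$ satisfies $\varphi$ if $\mathcal{S},I\models\varphi$ for some $I$. Atoms: $Cl(\varphi)$ is the set of subformulas of $\varphi$ and their negations (identifying $\neg\neg\alpha$ with $\alpha$, $\neg\langle R\rangle\alpha$ with $[R]\neg\alpha$); $Cl^+(\varphi)$ adds all $\langle R\rangle\alpha$, $\neg\langle R\rangle\alpha$ for $R\in\{A,B,\bar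 B\}$, $\alpha\in Cl(\varphi)$. A $\varphi$-atom is a nonempty $F\subseteq Cl^+(\varphi)$ with: $\alpha\in F$ iff $\neg\alpha\notin F$ for all $\alpha\in Cl^+(\varphi)$, and $\alpha\vee\beta\in F$ iff $\alpha\in F$ or $\beta\in F$. $obs(F)=\{\alpha\in Cl(\varphi):\alpha\in F\}$, $Req_R(F)=\{\alpha\in Cl(\varphi):\langle R\rangle\alpha\in F\}$. $F\leadsto_A G$ iff $Req_A(F)=obs(G)\cup Req_B(G)\cup Req_{\bar B}(G)$; $F\leadsto_B G$ iff $obs(F)\cup Req_{\bar B}(F)\subseteq Req_{\bar B}(G)\subseteq obs(F)\cup Req_{\bar B}(F)\cup Req_B(F)$ and $obs(G)\cup Req_B(G)\subseteq Req_B(F)\subseteq obs(G)\cup Req_B(G)\cup Req_{\bar B}(G)$. Compass structures: $\mathbb{P}_N=\{(x,y):0\le x<y<N\}$ with relations $A,B,\bar B$ as for the intervals $[x,y]$. A $\varphi$-compass structure of length $N$ is $(\mathbb{P}_N,\mathcal{L})$, $\mathcal{L}$ mapping points to $\varphi$-atoms, such that $p\,R\,q$ implies $\mathcal{L}(p)\leadsto_R\mathcal{L}(q)$ for $R\in\{A,B\}$ (consistency), and for every $p$, $R\in\{A,B,\bar B\}$, $\alpha\in Req_R(\mathcal{L}(p))$ there is $q$ with $p\,R\,q$ and $\alpha\in obs(\mathcal{L}(q))$ (fulfillment). It features $\alpha$ if $\alpha\in\mathcal{L}(p)$ for some $p$. *)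

(* Defs.v *)
From Stdlib Require Import List Arith.
Import ListNotations.

Inductive rel : Type := RA | RB | RBbar.

Inductive formula : Type :=
| Var : nat -> formula
| Neg : formula -> formula
| Or  : formula -> formula -> formula
| Dia : rel -> formula -> formula.

Definition rel_eq_dec : forall r s : rel, {r = s} + {r <> s}.
Proof. decide equality. Defined.

Definition formula_eq_dec : forall f g : formula, {f = g} + {f <> g}.
Proof. decide equality; first [apply Nat.eq_dec | apply rel_eq_dec]. Defined.

Definition Box (R : rel) (f : formula) : formula := Neg (Dia R (Neg f)).

Fixpoint subformulas (f : formula) : list formula :=
  f :: match f with
       | Var _ => []
       | Neg g => subformulas g
       | Or g h => subformulas g ++ subformulas h
       | Dia _ g => subformulas g
       end.

Definition fsize (f : formula) : nat := length (nodup formula_eq_dec (subformulas f)).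

Definition subformula (g f : formula) : Prop := In g (subformulas f).

(* A finite interval structure of length N: intervals [x,y] with x < y < N,
   labelling sigma x y p  <->  p \in sigma([x,y]). *)
Fixpoint sat (N : nat) (sigma : nat -> nat -> nat -> Prop) (x y : nat) (f : formula) : Prop :=
  match f with
  | Var p => sigma x y p
  | Neg g => ~ sat N sigma x y g
  | Or g h => sat N sigma x y g \/ sat N sigma x y h
  | Dia RA g => exists z, y < z /\ z < N /\ sat N sigma y z g
  | Dia RB g => exists z, x < z /\ z < y /\ sat N sigma x z g
  | Dia RBbar g => exists z, y < z /\ z < N /\ sat N sigma x z g
  end.

Definition finitely_satisfiable (phi : formula) : Prop :=
  exists (N : nat) (sigma : nat -> nat -> nat -> Prop) (x y : nat),
    x < y /\ y < N /\ sat N sigma x y phi.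

Definition neg (f : formula) : formula :=
  match f with Neg g => g | _ => Neg f end.

(* normal form: canonical representative modulo ~~a = a
   (hence also ~<R>a = [R]~a) *)
Fixpoint nf (f : formula) : formula :=
  match f with
  | Var p => Var p
  | Neg g => neg (nf g)
  | Or g h => Or (nf g) (nf h)
  | Dia R g => Dia R (nf g)
  end.

Definition InCl (phi a : formula) : Prop :=
  exists b, subformula b phi /\ (a = nf b \/ a = neg (nf b)).

Definition InClp (phi a : formula) : Prop :=
  InCl phi a \/
  exists (R : rel) (b : formula), InCl phi b /\ (a = Dia R b \/ a = Neg (Dia R b)).

Definition atom (phi : formula) (F : formula -> Prop) : Prop :=
  (exists a, F a) /\
  (forall a, F a -> InClp phi a) /\
  (forall a, InClp phi a -> (F a <-> ~ F (neg a))) /\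
  (forall a b, InClp phi (Or a b) -> (F (Or a b) <-> F a \/ F b)).

Definition obs (phi : formula) (F : formula -> Prop) (a : formula) : Prop :=
  InCl phi a /\ F a.
Definition Req (phi : formula) (R : rel) (F : formula -> Prop) (a : formula) : Prop :=
  InCl phi a /\ F (Dia R a).

Definition leadsto_A (phi : formula) (F G : formula -> Prop) : Prop :=
  forall a, Req phi RA F a <-> (obs phi G a \/ Req phi RB G a \/ Req phi RBbar G a).

Definition leadsto_B (phi : formula) (F G : formula -> Prop) : Prop :=
  (forall a, (obs phi F a \/ Req phi RBbar F a) -> Req phi RBbar G a) /\
  (forall a, Req phi RBbar G a -> (obs phi F a \/ Req phi RBbar F a \/ Req phi RB F a)) /\
  (forall a, (obs phi G a \/ Req phi RB G a) -> Req phi RB F a) /\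
  (forall a, Req phi RB F a -> (obs phi G a \/ Req phi RB G a \/ Req phi RBbar G a)).

Definition point (N x y : nat) : Prop := x < y /\ y < N.

Definition prel (R : rel) (x y x' y' : nat) : Prop :=
  match R with
  | RA => y = x'
  | RB => x = x' /\ y' < y
  | RBbar => x = x' /\ y < y'
  end.

Definition compass (phi : formula) (N : nat) (L : nat -> nat -> formula -> Prop) : Prop :=
  (forall x y, point N x y -> atom phi (L x y)) /\
  (forall x y x' y', point N x y -> point N x' y' ->
     prel RA x y x' y' -> leadsto_A phi (L x y) (L x' y')) /\
  (forall x y x' y', point N x y -> point N x' y' ->
     prel RB x y x' y' -> leadsto_B phi (L x y) (L x' y')) /\
  (forall x y R a, point N x y -> Req phi R (L x y) a ->
     exists x' y', point N x' y' /\ prel R x y x' y' /\ obs phi (L x' y') a).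

Definition features (L : nat -> nat -> formula -> Prop) (N : nat) (a : formula) : Prop :=
  exists x y, point N x y /\ L x y (nf a).

(* Main.v *)
Require Import Defs.
From Stdlib Require Import List Arith Lia Classical ClassicalEpsilon FunctionalExtensionality PropExtensionality.
Import ListNotations.

Lemma nf_not_negneg : forall f h, nf f <> Neg (Neg h).
Proof.
  induction f; intros h0 H; simpl in H; try discriminate.
  unfold neg in H. destruct (nf f) eqn:E; inversion H; subst.
  exact (IHf (Neg h0) eq_refl).
Qed.

Lemma neg_neg_nf : forall f, neg (neg (nf f)) = nf f.
Proof.
  intro f. pose proof (nf_not_negneg f) as Hn.
  destruct (nf f) eqn:E; simpl; auto.
  destruct f0; simpl; auto. exfalso. apply (Hn f0). reflexivity.
Qed.

Lemma subformula_refl : forall f, subformula f f.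
Proof. intro f; destruct f; left; reflexivity. Qed.

Lemma subformula_trans : forall f g h, subformula g f -> subformula h g -> subformula h f.
Proof.
  unfold subformula. induction f; intros g h H1 H2; simpl in H1.
  - destruct H1 as [<- | []]; auto.
  - destruct H1 as [<- | H1]; auto. simpl; right. eapply IHf; eauto.
  - destruct H1 as [<- | H1]; auto. simpl; right.
    apply in_app_or in H1. apply in_or_app. destruct H1; [left; eapply IHf1 | right; eapply IHf2]; eauto.
  - destruct H1 as [<- | H1]; auto. simpl; right. eapply IHf; eauto.
Qed.

Lemma sub_Neg : forall g phi, subformula (Neg g) phi -> subformula g phi.
Proof. intros. eapply subformula_trans; eauto. unfold subformula; simpl; right; apply subformula_refl. Qed.
Lemma sub_Or1 : forall g h phi, subformula (Or g h) phi -> subformula g phi.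
Proof. intros. eapply subformula_trans; eauto. unfold subformula; simpl; right; apply in_or_app; left; apply subformula_refl. Qed.
Lemma sub_Or2 : forall g h phi, subformula (Or g h) phi -> subformula h phi.
Proof. intros. eapply subformula_trans; eauto. unfold subformula; simpl; right; apply in_or_app; right; apply subformula_refl. Qed.
Lemma sub_Dia : forall r g phi, subformula (Dia r g) phi -> subformula g phi.
Proof. intros. eapply subformula_trans; eauto. unfold subformula; simpl; right; apply subformula_refl. Qed.

Lemma InCl_nf : forall phi b, subformula b phi -> InCl phi (nf b).
Proof. intros. exists b; auto. Qed.

Lemma InCl_neg : forall phi a, InCl phi a -> InCl phi (neg a).
Proof.
  intros phi a (b & Hb & [-> | ->]); exists b; split; auto.
  left. apply neg_neg_nf.
Qed.

Lemma InClp_neg : forall phi a, InClp phi a -> InClp phi (neg a).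
Proof.
  intros phi a [H | (R & b & Hb & [-> | ->])].
  - left; apply InCl_neg; auto.
  - right; exists R, b; auto.
  - right; exists R, b; auto.
Qed.

Lemma neg_is_Or : forall x a b, neg x = Or a b -> x = Neg (Or a b).
Proof. intros x a b H; destruct x; simpl in H; inversion H; subst; auto. Qed.

Lemma nf_Or : forall c a b, (nf c = Or a b \/ nf c = Neg (Or a b)) ->
  exists c1 c2, subformula c1 c /\ subformula c2 c /\ a = nf c1 /\ b = nf c2.
Proof.
  induction c; intros a b H; simpl in H.
  - destruct H; discriminate.
  - assert (Hs : forall c1, subformula c1 c -> subformula c1 (Neg c)).
    { intros c1 Hc; unfold subformula; simpl; right; exact Hc. }
    pose proof (nf_not_negneg c) as Hn.
    destruct (nf c) eqn:E; simpl in H; destruct H as [H|H]; inversion H; subst.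
    + destruct (IHc a b (or_intror eq_refl)) as (c1 & c2 & ? & ? & ? & ?).
      exists c1, c2; auto.
    + exfalso; eapply Hn; reflexivity.
    + destruct (IHc a b (or_introl eq_refl)) as (c1 & c2 & ? & ? & ? & ?).
      exists c1, c2; auto.
  - destruct H as [H|H]; inversion H; subst.
    exists c1, c2; repeat split; auto;
    unfold subformula; simpl; right; apply in_or_app; [left|right]; apply subformula_refl.
  - destruct H; discriminate.
Qed.

Lemma InClp_Or : forall phi a b, InClp phi (Or a b) -> InCl phi a /\ InCl phi b.
Proof.
  intros phi a b [(c & Hc & [H | H]) | (R & c & _ & [H|H])]; try discriminate.
  - destruct (nf_Or c a b (or_introl (eq_sym H))) as (c1 & c2 & H1 & H2 & -> & ->).
    split; apply InCl_nf; eapply subformula_trans; eauto.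
  - apply eq_sym, neg_is_Or in H.
    destruct (nf_Or c a b (or_intror H)) as (c1 & c2 & H1 & H2 & -> & ->).
    split; apply InCl_nf; eapply subformula_trans; eauto.
Qed.

Lemma sat_neg : forall N s x y a, sat N s x y (neg a) <-> ~ sat N s x y a.
Proof.
  intros. destruct a; simpl; try tauto.
Qed.

Lemma sat_nf : forall N s f x y, sat N s x y (nf f) <-> sat N s x y f.
Proof.
  induction f; intros x y; simpl.
  - tauto.
  - rewrite sat_neg, IHf. tauto.
  - rewrite IHf1, IHf2. tauto.
  - destruct r; split; intros (z & H1 & H2 & H3); exists z; repeat split; auto; apply IHf; auto.
Qed.

Lemma sat_shift : forall N s x0 f x y,
  sat (N - x0) (fun x y p => s (x + x0) (y + x0) p) x y f <-> sat N s (x + x0) (y + x0) f.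
Proof.
  induction f; intros x y; simpl.
  - tauto.
  - rewrite IHf; tauto.
  - rewrite IHf1, IHf2; tauto.
  - destruct r; split.
    + intros (z & H1 & H2 & H3). exists (z + x0). rewrite IHf in H3. repeat split; auto; lia.
    + intros (z & H1 & H2 & H3). exists (z - x0). rewrite IHf. replace (z - x0 + x0) with z by lia. repeat split; auto; lia.
    + intros (z & H1 & H2 & H3). exists (z + x0). rewrite IHf in H3. repeat split; auto; lia.
    + intros (z & H1 & H2 & H3). exists (z - x0). rewrite IHf. replace (z - x0 + x0) with z by lia. repeat split; auto; lia.
    + intros (z & H1 & H2 & H3). exists (z + x0). rewrite IHf in H3. repeat split; auto; lia.
    + intros (z & H1 & H2 & H3). exists (z - x0). rewrite IHf. replace (z - x0 + x0) with z by lia. repeat split; auto; lia.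
Qed.

Definition tlab (phi : formula) N s (x y : nat) (a : formula) : Prop := InClp phi a /\ sat N s x y a.

Lemma InClp_Dia : forall phi R a, InCl phi a -> InClp phi (Dia R a).
Proof. intros; right; exists R, a; auto. Qed.

Lemma compass_truth : forall phi N s, compass phi N (tlab phi N s).
Proof.
  intros phi N s. unfold tlab.
  split; [|split; [|split]].
  - intros x y Hp. split; [|split; [|split]].
    + destruct (classic (sat N s x y (nf phi))) as [H|H].
      * exists (nf phi). split; auto. left. apply InCl_nf, subformula_refl.
      * exists (neg (nf phi)). split. left. apply InCl_neg, InCl_nf, subformula_refl.
        apply sat_neg; auto.
    + intros a [H _]; auto.
    + intros a Ha. pose proof (InClp_neg phi a Ha). rewrite sat_neg. tauto.
    + intros a b Hab. destruct (InClp_Or phi a b Hab) as [Ha Hb]. simpl.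
      split.
      * intros [_ [H|H]]; [left|right]; split; auto; left; auto.
      * intros [[_ H]|[_ H]]; split; auto.
  - intros x y x' y' Hp Hp' Hr. simpl in Hr. subst x'. destruct Hp as [H1 H2]; destruct Hp' as [H3 H4].
    intro a. unfold Req, obs. simpl. split.
    + intros [Ha [_ (z & Hz1 & Hz2 & Hz)]].
      destruct (lt_eq_lt_dec z y') as [[Hl|He]|Hg].
      * right; left. split; auto. split. apply InClp_Dia; auto. exists z; auto.
      * subst; left; split; auto; split; auto; left; auto.
      * right; right. split; auto. split. apply InClp_Dia; auto. exists z; auto.
    + intros [[Ha [_ H]] | [[Ha [_ (z & Hz1 & Hz2 & Hz)]] | [Ha [_ (z & Hz1 & Hz2 & Hz)]]]];
        split; auto; split; try (apply InClp_Dia; auto).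
      * exists y'; auto.
      * exists z; repeat split; auto; lia.
      * exists z; repeat split; auto; lia.
  - intros x y x' y' Hp Hp' Hr. simpl in Hr. destruct Hr as [<- Hr].
    destruct Hp as [H1 H2]; destruct Hp' as [H3 H4].
    unfold leadsto_B, Req, obs; simpl. split; [|split; [|split]].
    + intros a [[Ha [_ H]] | [Ha [_ (z & Hz1 & Hz2 & Hz)]]]; split; auto; split; try (apply InClp_Dia; auto).
      * exists y; auto.
      * exists z; repeat split; auto; lia.
    + intros a [Ha [_ (z & Hz1 & Hz2 & Hz)]].
      destruct (lt_eq_lt_dec z y) as [[Hl|He]|Hg].
      * right; right. split; auto. split. apply InClp_Dia; auto. exists z; repeat split; auto; lia.
      * subst; left; split; auto; split; auto; left; auto.
      * right; left. split; auto. split. apply InClp_Dia; auto. exists z; auto.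
    + intros a [[Ha [_ H]] | [Ha [_ (z & Hz1 & Hz2 & Hz)]]]; split; auto; split; try (apply InClp_Dia; auto).
      * exists y'; auto.
      * exists z; repeat split; auto; lia.
    + intros a [Ha [_ (z & Hz1 & Hz2 & Hz)]].
      destruct (lt_eq_lt_dec z y') as [[Hl|He]|Hg].
      * right; left. split; auto. split. apply InClp_Dia; auto. exists z; repeat split; auto; lia.
      * subst; left; split; auto; split; auto; left; auto.
      * right; right. split; auto. split. apply InClp_Dia; auto. exists z; repeat split; auto; lia.
  - intros x y R a Hp [Ha [_ H]]. destruct Hp as [H1 H2].
    destruct R; simpl in H; destruct H as (z & Hz1 & Hz2 & Hz).
    + exists y, z. split; [split; lia|]. split; [reflexivity|]. split; auto. split; auto. left; auto.
    + exists x, z. split; [split; lia|]. split; [simpl; split; auto|]. split; auto. split; auto. left; auto.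
    + exists x, z. split; [split; lia|]. split; [simpl; split; auto|]. split; auto. split; auto. left; auto.
Qed.

Lemma truth_lemma : forall phi N L, compass phi N L ->
  forall b, subformula b phi -> forall x y, point N x y ->
  (sat N (fun x y p => L x y (Var p)) x y b <-> L x y (nf b)).
Proof.
  intros phi N L [Hat [HA [HB Hf]]].
  induction b; intros Hsub x y Hp; simpl.
  - tauto.
  - rewrite IHb by (auto; eapply sub_Neg; eauto).
    destruct (Hat x y Hp) as (_ & _ & Hn & _).
    assert (Hc : InClp phi (nf b)) by (left; apply InCl_nf; eapply sub_Neg; eauto).
    pose proof (Hn _ Hc). destruct (classic (L x y (neg (nf b)))); tauto.
  - rewrite IHb1 by (auto; eapply sub_Or1; eauto). rewrite IHb2 by (auto; eapply sub_Or2; eauto).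
    destruct (Hat x y Hp) as (_ & _ & _ & Ho).
    rewrite Ho. tauto.
    left. exists (Or b1 b2). auto.
  - assert (Hg : subformula b phi) by (eapply sub_Dia; eauto).
    assert (Hc : InCl phi (nf b)) by (apply InCl_nf; auto).
    destruct Hp as [H1 H2].
    destruct r; split.
    + intros (z & Hz1 & Hz2 & Hz). rewrite IHb in Hz by (auto; split; lia).
      apply (HA x y y z (conj H1 H2) (conj Hz1 Hz2) eq_refl). left. split; auto.
    + intro H. destruct (Hf x y RA (nf b) (conj H1 H2) (conj Hc H)) as (x' & z & [Hp1 Hp2] & Hr & [_ Ho]).
      simpl in Hr. subst x'. exists z. repeat split; auto. apply IHb; auto. split; auto.
    + intros (z & Hz1 & Hz2 & Hz). rewrite IHb in Hz by (auto; split; lia).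
      destruct (HB x y x z (conj H1 H2) (conj Hz1 (Nat.lt_trans _ _ _ Hz2 H2)) (conj eq_refl Hz2)) as (_ & _ & H3 & _).
      apply (H3 (nf b)). left. split; auto.
    + intro H. destruct (Hf x y RB (nf b) (conj H1 H2) (conj Hc H)) as (x' & z & [Hp1 Hp2] & [Hr1 Hr2] & [_ Ho]).
      subst x'. exists z. repeat split; auto. apply IHb; auto. split; auto.
    + intros (z & Hz1 & Hz2 & Hz). rewrite IHb in Hz by (auto; split; lia).
      destruct (HB x z x y (conj (Nat.lt_trans _ _ _ H1 Hz1) Hz2) (conj H1 H2) (conj eq_refl Hz1)) as (H3 & _ & _ & _).
      apply (H3 (nf b)). left. split; auto.
    + intro H. destruct (Hf x y RBbar (nf b) (conj H1 H2) (conj Hc H)) as (x' & z & [Hp1 Hp2] & [Hr1 Hr2] & [_ Ho]).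
      subst x'. exists z. repeat split; auto. apply IHb; auto. split; auto.
Qed.

Lemma lB_trans : forall phi F G H, leadsto_B phi F G -> leadsto_B phi G H -> leadsto_B phi F H.
Proof.
  intros phi F G H (A1 & A2 & A3 & A4) (B1 & B2 & B3 & B4).
  split; [|split; [|split]]; intros a Ha.
  - apply B1. right. apply A1. exact Ha.
  - destruct (B2 a Ha) as [H1|[H1|H1]].
    + right; right. apply A3. left; exact H1.
    + apply A2. exact H1.
    + right; right. apply A3. right; exact H1.
  - apply A3. right. apply B3. exact Ha.
  - destruct (A4 a Ha) as [H1|[H1|H1]].
    + right; right. apply B1. left; exact H1.
    + apply B4. exact H1.
    + right; right. apply B1. right; exact H1.
Qed.

Lemma lB_S : forall phi F G, leadsto_B phi F G -> forall a,
  (obs phi F a \/ Req phi RB F a \/ Req phi RBbar F a) <-> (obs phi G a \/ Req phi RB G a \/ Req phi RBbar G a).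
Proof.
  intros phi F G (A1 & A2 & A3 & A4) a. split.
  - intros [H1|[H1|H1]].
    + right; right. apply A1. left; exact H1.
    + apply A4. exact H1.
    + right; right. apply A1. right; exact H1.
  - intros [H1|[H1|H1]].
    + right; left. apply A3. left; exact H1.
    + right; left. apply A3. right; exact H1.
    + apply A2 in H1. tauto.
Qed.

Definition Lc (L : nat -> nat -> formula -> Prop) (y d : nat) (g : nat -> nat) :=
  fun i j => if j <=? y then L i j else L (if i <? y then g i else i + d) (j + d).

Lemma contract : forall phi N L y d g,
  compass phi N L -> 1 <= y -> 0 < d -> y + d < N ->
  (forall x, x < y -> g x < y + d /\ L (g x) (y + d) = L x y) ->
  compass phi (N - d) (Lc L y d g).
Proof.
  intros phi N L y d g [Hat [HA [HB Hf]]] Hy Hd HN Hg.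
  set (G' := fun i => if i <? y then g i else i + d).
  assert (Hlow : forall i j, j <= y -> Lc L y d g i j = L i j).
  { intros i j Hj. unfold Lc. destruct (Nat.leb_spec j y); [reflexivity|lia]. }
  assert (Hhigh : forall i j, y < j -> Lc L y d g i j = L (G' i) (j + d)).
  { intros i j Hj. unfold Lc. destruct (Nat.leb_spec j y); [lia|reflexivity]. }
  assert (HG1 : forall i, i < y -> G' i = g i).
  { intros i Hi. unfold G'. destruct (Nat.ltb_spec i y); [reflexivity|lia]. }
  assert (HG2 : forall i, y <= i -> G' i = i + d).
  { intros i Hi. unfold G'. destruct (Nat.ltb_spec i y); [lia|reflexivity]. }
  assert (HGp : forall i j, i < j -> y < j -> j < N - d -> point N (G' i) (j + d)).
  { intros i j Hij Hj HjN. unfold point. destruct (Nat.lt_ge_cases i y) as [Hi|Hi].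
    - rewrite HG1 by exact Hi. destruct (Hg i Hi). lia.
    - rewrite HG2 by exact Hi. lia. }
  clearbody G'.
  assert (HfBbar : forall i j a, point (N-d) i j -> Req phi RBbar (Lc L y d g i j) a ->
     exists j', j < j' /\ j' < N - d /\ obs phi (Lc L y d g i j') a).
  { intros i j a [Hij HjN] Hr.
    destruct (Nat.le_gt_cases j y) as [Hj|Hj].
    - rewrite Hlow in Hr by lia.
      destruct (Hf i j RBbar a ltac:(unfold point; lia) Hr) as (x' & u & [Hxu HuN] & [Hx Hju] & Ho). subst x'.
      destruct (Nat.le_gt_cases u y) as [Hu|Hu].
      + exists u. split; [lia|]. split; [lia|]. rewrite Hlow by lia. exact Ho.
      + assert (Hr2 : Req phi RBbar (L i y) a).
        { destruct (HB i u i y) as [H1 _]; [unfold point; lia| unfold point; lia | simpl; split; [reflexivity|lia] |].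
          apply H1. left. exact Ho. }
        assert (Hiy: i < y) by lia.
        destruct (Hg i Hiy) as [Hgi Heq]. rewrite <- Heq in Hr2.
        destruct (Hf (g i) (y+d) RBbar a ltac:(unfold point; lia) Hr2) as (x'' & w & [Hxw HwN] & [Hx2 Hw] & Ho2).
        subst x''.
        exists (w - d). split; [lia|]. split; [lia|]. rewrite Hhigh by lia. rewrite HG1 by lia.
        replace (w - d + d) with w by lia. exact Ho2.
    - rewrite Hhigh in Hr by lia.
      destruct (Hf (G' i) (j+d) RBbar a (HGp i j Hij Hj HjN) Hr) as (x'' & w & [Hxw HwN] & [Hx2 Hw] & Ho2).
      subst x''. exists (w-d). split; [lia|]. split; [lia|]. rewrite Hhigh by lia.
      replace (w-d+d) with w by lia. exact Ho2. }
  split; [|split; [|split]].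
  - intros i j [Hij HjN]. destruct (Nat.le_gt_cases j y).
    + rewrite Hlow by lia. apply Hat; unfold point; lia.
    + rewrite Hhigh by lia. apply Hat; apply HGp; auto.
  - intros i j j' k [Hij HjN] [Hjk HkN] Hrel. simpl in Hrel. subst j'.
    destruct (Nat.le_gt_cases k y) as [Hk|Hk].
    + rewrite !Hlow by lia. apply HA; unfold point; try lia. simpl; reflexivity.
    + destruct (Nat.le_gt_cases j y) as [Hj|Hj].
      * rewrite (Hlow i j) by lia. rewrite (Hhigh j k) by lia.
        destruct (Nat.eq_dec j y) as [Hjy|Hjy].
        -- subst j. rewrite (HG2 y) by lia. destruct (Hg i Hij) as [Hgi Heq]. rewrite <- Heq.
           apply HA; [unfold point; lia | unfold point; lia | simpl; reflexivity].
        -- rewrite (HG1 j) by lia. destruct (Hg j ltac:(lia)) as [Hgj Heq].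
           assert (A1 : leadsto_A phi (L i j) (L j y)) by (apply HA; [unfold point; lia | unfold point; lia | simpl; reflexivity]).
           assert (B1 : leadsto_B phi (L (g j) (k+d)) (L (g j) (y+d)))
             by (apply HB; [unfold point; lia | unfold point; lia | simpl; split; [reflexivity|lia]]).
           rewrite Heq in B1. intro a. pose proof (lB_S phi _ _ B1 a). pose proof (A1 a). tauto.
      * rewrite !Hhigh by lia. rewrite (HG2 j) by lia.
        apply HA; [apply HGp; lia | unfold point; lia | simpl; reflexivity].
  - intros i j i2 j' [Hij HjN] [Hij' Hj'N] Hrel. simpl in Hrel. destruct Hrel as [<- Hj'j].
    destruct (Nat.le_gt_cases j y) as [Hj|Hj].
    + rewrite !Hlow by lia. apply HB; [unfold point; lia | unfold point; lia | simpl; split; [reflexivity|lia]].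
    + destruct (Nat.le_gt_cases j' y) as [Hj'|Hj'].
      * rewrite (Hhigh i j) by lia. rewrite (Hlow i j') by lia. rewrite HG1 by lia.
        destruct (Hg i ltac:(lia)) as [Hgi Heq].
        assert (B1 : leadsto_B phi (L (g i) (j+d)) (L (g i) (y+d)))
          by (apply HB; [unfold point; lia | unfold point; lia | simpl; split; [reflexivity|lia]]).
        rewrite Heq in B1.
        destruct (Nat.eq_dec j' y) as [->|Hne]; [exact B1|].
        apply (lB_trans _ _ _ _ B1). apply HB; [unfold point; lia | unfold point; lia | simpl; split; [reflexivity|lia]].
      * rewrite !Hhigh by lia. apply HB; [apply HGp; lia | apply HGp; lia | simpl; split; [reflexivity|lia]].
  - intros i j R a [Hij HjN] Hr. destruct R.
    + destruct (Nat.le_gt_cases j y) as [Hj|Hj].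
      * rewrite Hlow in Hr by lia.
        destruct (Hf i j RA a ltac:(unfold point; lia) Hr) as (x' & w & [Hxw HwN] & Hx & Ho).
        simpl in Hx. subst x'.
        destruct (Nat.le_gt_cases w y) as [Hw|Hw].
        -- exists j, w. split; [unfold point; lia|]. split; [reflexivity|]. rewrite Hlow by lia. exact Ho.
        -- destruct (Nat.eq_dec j y) as [Hjy|Hjy].
           ++ subst j. destruct (Hg i Hij) as [Hgi Heq]. rewrite <- Heq in Hr.
              destruct (Hf (g i) (y+d) RA a ltac:(unfold point; lia) Hr) as (x' & w' & [Hxw' Hw'N] & Hx' & Ho').
              simpl in Hx'. subst x'.
              exists y, (w' - d). split; [unfold point; lia|]. split; [reflexivity|].
              rewrite Hhigh by lia. rewrite HG2 by lia. replace (w' - d + d) with w' by lia. exact Ho'.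
           ++ assert (Hr2 : Req phi RBbar (L j y) a).
              { destruct (HB j w j y) as [H1 _]; [unfold point; lia| unfold point; lia | simpl; split; [reflexivity|lia] |].
                apply H1. left. exact Ho. }
              rewrite <- (Hlow j y) in Hr2 by lia.
              destruct (HfBbar j y a ltac:(unfold point; lia) Hr2) as (j' & Hj1 & Hj2 & Ho2).
              exists j, j'. split; [unfold point; lia|]. split; [reflexivity|]. exact Ho2.
      * rewrite Hhigh in Hr by lia.
        destruct (Hf _ _ RA a (HGp i j Hij Hj HjN) Hr) as (x' & w & [Hxw HwN] & Hx & Ho).
        simpl in Hx. subst x'.
        exists j, (w - d). split; [unfold point; lia|]. split; [reflexivity|].
        rewrite Hhigh by lia. rewrite HG2 by lia. replace (w-d+d) with w by lia. exact Ho.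
    + destruct (Nat.le_gt_cases j y) as [Hj|Hj].
      * rewrite Hlow in Hr by lia.
        destruct (Hf i j RB a ltac:(unfold point; lia) Hr) as (x' & u & [Hxu HuN] & [Hx Hu] & Ho).
        subst x'. exists i, u. split; [unfold point; lia|]. split; [simpl; split; [reflexivity|lia]|].
        rewrite Hlow by lia. exact Ho.
      * rewrite Hhigh in Hr by lia.
        destruct (Hf _ _ RB a (HGp i j Hij Hj HjN) Hr) as (x' & u & [Hxu HuN] & [Hx Hu] & Ho).
        subst x'.
        destruct (Nat.le_gt_cases u (y + d)) as [Hu2|Hu2].
        -- assert (Hiy : i < y).
           { destruct (Nat.lt_ge_cases i y) as [Hi|Hi]; auto. rewrite HG2 in Hxu by lia. lia. }
           rewrite HG1 in Hxu, Ho by lia.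
           destruct (Hg i Hiy) as [Hgi Heq].
           destruct (Nat.eq_dec u (y + d)) as [->|Hne].
           ++ rewrite Heq in Ho. exists i, y. split; [unfold point; lia|]. split; [simpl; split; [reflexivity|lia]|].
              rewrite Hlow by lia. exact Ho.
           ++ assert (Hr2 : Req phi RB (L (g i) (y + d)) a).
              { destruct (HB (g i) (y+d) (g i) u) as (_ & _ & H3 & _);
                  [unfold point; lia| unfold point; lia | simpl; split; [reflexivity|lia] |].
                apply H3. left. exact Ho. }
              rewrite Heq in Hr2.
              destruct (Hf i y RB a ltac:(unfold point; lia) Hr2) as (x' & v & [Hxv HvN] & [Hx' Hv] & Ho').
              subst x'. exists i, v. split; [unfold point; lia|]. split; [simpl; split; [reflexivity|lia]|].
              rewrite Hlow by lia. exact Ho'.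
        -- assert (Hiu : i < u - d).
           { destruct (Nat.lt_ge_cases i y) as [Hi|Hi]; [lia|]. rewrite HG2 in Hxu by lia. lia. }
           exists i, (u - d). split; [unfold point; lia|]. split; [simpl; split; [reflexivity|lia]|].
           rewrite Hhigh by lia. replace (u - d + d) with u by lia. exact Ho.
    + destruct (HfBbar i j a ltac:(unfold point; lia) Hr) as (j' & Hj1 & Hj2 & Ho2).
      exists i, j'. split; [unfold point; lia|]. split; [simpl; split; [reflexivity|lia]|]. exact Ho2.
Qed.

Fixpoint btn (l : list bool) : nat :=
  match l with [] => 0 | b :: l => (if b then 1 else 0) + 2 * btn l end.

Lemma btn_inj : forall l1 l2, length l1 = length l2 -> btn l1 = btn l2 -> l1 = l2.
Proof.
  induction l1 as [|b1 l1 IH]; intros [|b2 l2] Hl Hb; simpl in *; try discriminate; auto.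
  assert (b1 = b2 /\ btn l1 = btn l2) as [-> H].
  { destruct b1, b2; split; auto; lia. }
  f_equal. apply IH; auto.
Qed.

Lemma btn_lt : forall l, btn l < 2 ^ length l.
Proof. induction l as [|b l IH]; simpl; [lia|]. destruct b; lia. Qed.

Lemma btn_pos : forall l, In true l -> 0 < btn l.
Proof. induction l as [|b l IH]; simpl; [tauto|]. intros [->|H]; [lia|]. specialize (IH H). lia. Qed.

Definition pb (P : Prop) : bool := if excluded_middle_informative P then true else false.
Lemma pb_true : forall P, pb P = true <-> P.
Proof. intro P. unfold pb. destruct (excluded_middle_informative P); split; auto; discriminate. Qed.

Lemma map_eq_in : forall (A B : Type) (f g : A -> B) l x, map f l = map g l -> In x l -> f x = g x.
Proof.
  induction l as [|a l IH]; simpl; intros x H Hx; [tauto|]. injection H as H1 H2.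
  destruct Hx as [->|Hx]; auto.
Qed.

Definition keys (phi : formula) : list formula :=
  flat_map (fun b => [nf b; Dia RA (nf b); Dia RB (nf b); Dia RBbar (nf b);
                      Dia RA (neg (nf b)); Dia RB (neg (nf b)); Dia RBbar (neg (nf b))])
    (nodup formula_eq_dec (subformulas phi)).

Lemma keys_length : forall phi, length (keys phi) = 7 * fsize phi.
Proof.
  intro phi. unfold keys, fsize. induction (nodup formula_eq_dec (subformulas phi)) as [|b l IH]; simpl; auto.
  rewrite IH. lia.
Qed.

Definition code (phi : formula) (F : formula -> Prop) : nat := btn (map (fun k => pb (F k)) (keys phi)).

Lemma code_lt : forall phi F, code phi F < 2 ^ (7 * fsize phi).
Proof. intros. unfold code. rewrite <- keys_length, <- (length_map (fun k => pb (F k))). apply btn_lt. Qed.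

Lemma in_keys : forall phi b k, subformula b phi ->
  In k [nf b; Dia RA (nf b); Dia RB (nf b); Dia RBbar (nf b);
        Dia RA (neg (nf b)); Dia RB (neg (nf b)); Dia RBbar (neg (nf b))] -> In k (keys phi).
Proof. intros. unfold keys. apply in_flat_map. exists b. split; auto. apply nodup_In. exact H. Qed.

Lemma code_inj : forall phi F G, atom phi F -> atom phi G -> code phi F = code phi G -> F = G.
Proof.
  intros phi F G HF HG Hc. unfold code in Hc. apply btn_inj in Hc; [|rewrite !length_map; auto].
  assert (Hk : forall k, In k (keys phi) -> (F k <-> G k)).
  { intros k Hk. pose proof (map_eq_in _ _ _ _ _ _ Hc Hk) as E.
    split; intro H; apply pb_true; [rewrite <- E | rewrite E]; apply pb_true; auto. }
  destruct HF as (_ & F2 & F3 & _). destruct HG as (_ & G2 & G3 & _).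
  apply functional_extensionality; intro a. apply propositional_extensionality.
  destruct (classic (InClp phi a)) as [Ha|Ha]; [| split; intro H; exfalso; apply Ha; auto].
  destruct Ha as [(b & Hb & [-> | ->]) | (R & c & (b & Hb & [-> | ->]) & [-> | ->])].
  - apply Hk. apply (in_keys phi b); simpl; auto.
  - assert (Hc1 : InClp phi (neg (nf b))) by (left; apply InCl_neg, InCl_nf; auto).
    rewrite (F3 _ Hc1), (G3 _ Hc1), neg_neg_nf.
    rewrite (Hk (nf b)) by (apply (in_keys phi b); simpl; auto). tauto.
  - apply Hk. apply (in_keys phi b); destruct R; simpl; tauto.
  - assert (Hc1 : InClp phi (Neg (Dia R (nf b)))) by (right; exists R, (nf b); split; auto; apply InCl_nf; auto).
    rewrite (F3 _ Hc1), (G3 _ Hc1). simpl.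
    rewrite (Hk (Dia R (nf b))) by (apply (in_keys phi b); destruct R; simpl; tauto). tauto.
  - apply Hk. apply (in_keys phi b); destruct R; simpl; tauto.
  - assert (Hc1 : InClp phi (Neg (Dia R (neg (nf b))))) by (right; exists R, (neg (nf b)); split; auto; apply InCl_neg, InCl_nf; auto).
    rewrite (F3 _ Hc1), (G3 _ Hc1). simpl.
    rewrite (Hk (Dia R (neg (nf b)))) by (apply (in_keys phi b); destruct R; simpl; tauto). tauto.
Qed.

Definition rowbits phi (L : nat -> nat -> formula -> Prop) r :=
  map (fun c => pb (exists x, x < r /\ code phi (L x r) = c)) (seq 0 (2 ^ (7 * fsize phi))).
Definition rsig phi L r := btn (rowbits phi L r).

Lemma rsig_lt : forall phi L r, rsig phi L r < 2 ^ (2 ^ (7 * fsize phi)).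
Proof. intros. unfold rsig. pose proof (btn_lt (rowbits phi L r)). unfold rowbits in *. rewrite length_map, length_seq in H. exact H. Qed.

Lemma rsig_pos : forall phi L r, 0 < r -> 0 < rsig phi L r.
Proof.
  intros. apply btn_pos. unfold rowbits.
  assert (E : pb (exists x, x < r /\ code phi (L x r) = code phi (L 0 r)) = true).
  { apply pb_true. exists 0. auto. }
  rewrite <- E. apply (in_map (fun c => pb (exists x, x < r /\ code phi (L x r) = c))).
  apply in_seq. pose proof (code_lt phi (L 0 r)). lia.
Qed.

Lemma rsig_eq : forall phi N L r r', compass phi N L -> r < N -> r' < N ->
  rsig phi L r = rsig phi L r' -> forall x, x < r -> exists x', x' < r' /\ L x' r' = L x r.
Proof.
  intros phi N L r r' Hc Hr Hr' Hs x Hx. unfold rsig in Hs. apply btn_inj in Hs; [|unfold rowbits; rewrite !length_map; auto].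
  assert (Hin : In (code phi (L x r)) (seq 0 (2 ^ (7 * fsize phi)))).
  { apply in_seq. pose proof (code_lt phi (L x r)). lia. }
  pose proof (map_eq_in _ _ _ _ _ _ Hs Hin) as E. simpl in E.
  assert (H1 : pb (exists x0, x0 < r /\ code phi (L x0 r) = code phi (L x r)) = true) by (apply pb_true; eauto).
  rewrite E in H1. destruct (proj1 (pb_true _) H1) as (x' & Hx' & Hcode).
  exists x'. split; auto. destruct Hc as [Hat _].
  apply code_inj with phi; auto; apply Hat; unfold point; lia.
Qed.

Lemma pigeon : forall (f : nat -> nat) m K, (forall r, 1 <= r <= m -> 0 < f r < K) -> 1 <= K -> K <= m ->
  exists r r', 1 <= r /\ r < r' /\ r' <= m /\ f r = f r'.
Proof.
  intros f m K Hf HK1 HK. apply NNPP. intro Hno.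
  assert (HN : NoDup (map f (seq 1 m))).
  { apply NoDup_map_NoDup_ForallPairs; [|apply seq_NoDup].
    intros a b Ha Hb Hab. apply in_seq in Ha, Hb. apply NNPP; intro Hne.
    destruct (proj1 (Nat.lt_gt_cases a b) Hne) as [Hl|Hl]; apply Hno.
    - exists a, b. repeat split; lia || auto.
    - exists b, a. repeat split; lia || auto. }
  assert (HI : incl (map f (seq 1 m)) (seq 1 (K - 1))).
  { intros v Hv. apply in_map_iff in Hv. destruct Hv as (r & <- & Hr). apply in_seq in Hr.
    apply in_seq. specialize (Hf r ltac:(lia)). lia. }
  pose proof (NoDup_incl_length HN HI). rewrite length_map, !length_seq in H. lia.
Qed.

Definition Sp phi (F : formula -> Prop) a := obs phi F a \/ Req phi RB F a \/ Req phi RBbar F a.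

Lemma main_ind : forall phi N L, compass phi N L -> 1 < N -> Sp phi (L 0 1) (nf phi) ->
  exists N' L', N' <= 2 ^ (2 ^ (7 * fsize phi)) /\ compass phi N' L' /\ features L' N' phi.
Proof.
  intros phi N. induction N as [N IH] using (well_founded_induction Wf_nat.lt_wf).
  intros L Hc HN HS.
  destruct (Nat.le_gt_cases N (2 ^ (2 ^ (7 * fsize phi)))) as [Hle|Hgt].
  - exists N, L. split; auto. split; auto.
    destruct Hc as (_ & _ & _ & Hf). unfold features.
    destruct HS as [[_ Ho] | [Hr | Hr]].
    + exists 0, 1. split; auto. split; lia.
    + destruct (Hf 0 1 RB _ ltac:(unfold point; lia) Hr) as (x' & y' & Hp & _ & [_ Ho]). eauto.
    + destruct (Hf 0 1 RBbar _ ltac:(unfold point; lia) Hr) as (x' & y' & Hp & _ & [_ Ho]). eauto.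
  - assert (HK : 1 <= 2 ^ (2 ^ (7 * fsize phi))).
    { pose proof (Nat.pow_nonzero 2 (2 ^ (7 * fsize phi)) ltac:(lia)). lia. }
    destruct (pigeon (rsig phi L) (N - 1) (2 ^ (2 ^ (7 * fsize phi))))
      as (r & r' & Hr1 & Hrr & Hr' & Hs).
    { intros r Hr. split; [apply rsig_pos; lia | apply rsig_lt]. }
    { exact HK. }
    { lia. }
    assert (Hex : forall x, exists x', x < r -> x' < r' /\ L x' r' = L x r).
    { intro x. destruct (Nat.lt_ge_cases x r) as [Hx|Hx].
      - destruct (rsig_eq phi N L r r' Hc ltac:(lia) ltac:(lia) Hs x Hx) as (x' & H1 & H2).
        exists x'. auto.
      - exists 0. intro; lia. }
    set (g := fun x => proj1_sig (constructive_indefinite_description _ (Hex x))).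
    assert (Hg : forall x, x < r -> g x < r + (r' - r) /\ L (g x) (r + (r' - r)) = L x r).
    { intros x Hx. unfold g. destruct (constructive_indefinite_description _ (Hex x)) as [x' Hx']. simpl.
      replace (r + (r' - r)) with r' by lia. auto. }
    pose proof (contract phi N L r (r' - r) g Hc Hr1 ltac:(lia) ltac:(lia) Hg) as Hc'.
    apply (IH (N - (r' - r)) ltac:(lia) _ Hc'); [lia|].
    unfold Lc. destruct (Nat.leb_spec 1 r); [exact HS | lia].
Qed.

Theorem theorem1 (phi : formula) :
  finitely_satisfiable phi <->
  exists (N : nat) (L : nat -> nat -> formula -> Prop),
    N <= 2 ^ (2 ^ (7 * fsize phi)) /\ compass phi N L /\ features L N phi.
Proof.
  split.
  - intros (N & sigma & x0 & y0 & Hxy & HyN & Hsat).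
    set (s' := fun x y p => sigma (x + x0) (y + x0) p).
    assert (Hs : sat (N - x0) s' 0 (y0 - x0) phi).
    { unfold s'. rewrite sat_shift. replace (0 + x0) with x0 by lia. replace (y0 - x0 + x0) with y0 by lia. exact Hsat. }
    apply (main_ind phi (N - x0) (tlab phi (N - x0) s')); [apply compass_truth | lia |].
    assert (Hc : InCl phi (nf phi)) by (apply InCl_nf, subformula_refl).
    destruct (Nat.eq_dec (y0 - x0) 1) as [E|E].
    + left. split; auto. split; [left; auto|]. apply sat_nf. rewrite <- E. exact Hs.
    + right; right. split; auto. split; [apply InClp_Dia; auto|]. simpl.
      exists (y0 - x0). repeat split; try lia. apply sat_nf. exact Hs.
  - intros (N & L & _ & Hc & (x & y & Hp & Hl)).
    exists N, (fun x y p => L x y (Var p)), x, y. destruct Hp as [H1 H2].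
    split; auto. split; auto.
    apply (truth_lemma phi N L Hc phi (subformula_refl phi) x y (conj H1 H2)). exact Hl.
Qed.
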